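(* Let $X$ be a finite set of proposals with $m=|X|$. Every divisiveness selection function $\Delta$ on $X$ that satisfies both Anonymity and Neutrality also satisfies Uniformity, i.e., $\Delta(R^U)=X$ for every perfectly uniform profile $R^U$.
   Context: Let $X$ be a finite set of proposals, $m=|X|$, and let $X!$ denote the set of all strict linear orders on $X$. A profile is a function $R:N\to X!$ where $N\subset\mathbb{N}$ is a finite nonempty set of agents (the electorate); write $R_i=R(i)$. A divisiveness selection function (DSF) is a function $\Delta$ mapping every profile (for every finite nonempty $N\subset\mathbb{N}$) to a nonempty subset of $X$. Anonymity: $\Delta(R)=\Delta(R\circ\sigma)$ for every profile $R$ and every bijection $\sigma:\mathbb{N}\to\mathbb{N}$ (so $R\circ\sigma$ is the profile obtained by letting agents exchange preferences, possibly with agents outside $N$). Neutrality: $\Delta(\sigma(R))=\sigma(\Delta(R))$ for every profile $R$ and every permutation $\sigma:X\to X$, where $\sigma$ is extended in the natural way to subsets of $X$ and to profiles (renaming proposals in every ranking). A profile is perfectly uniform if each of the $m!$ linear orders on $X$ occurs in it equally often (i.e., is reported by the same number of agents). *)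

(* Defs.v *)
From HB Require Import structures.
From mathcomp Require Import all_boot all_fingroup.
From mathcomp Require Import finmap.
Set Implicit Arguments. Unset Strict Implicit. Unset Printing Implicit Defensive.
Local Open Scope fset_scope.
Local Open Scope fmap_scope.

Section DSF.
Variable X : finType.

(* strict linear orders on X, as boolean relations on X * X:
   r (x, y) means "x is ranked strictly above y" *)
Definition is_slo (r : {ffun X * X -> bool}) : bool :=
  [&& [forall x, ~~ r (x, x)],
      [forall x, forall y, forall z, r (x, y) && r (y, z) ==> r (x, z)] &
      [forall x, forall y, (x != y) ==> r (x, y) || r (y, x)]].

Definition linord := {r : {ffun X * X -> bool} | is_slo r}.

Definition profile := {R : {fmap nat -> linord} | domf R != fset0}.

Definition prof (R : profile) : {fmap nat -> linord} := proj1_sig R.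

Definition is_DSF (D : profile -> {set X}) : Prop := forall R, D R != set0.

(* R' = R ∘ σ : electorate σ^{-1}(N), and R'_i = R_(σ i) *)
Definition agent_relabel (R R' : profile) (s : nat -> nat) : Prop :=
  forall i, (prof R').[? i] = (prof R).[? s i].

Definition anonymous (D : profile -> {set X}) : Prop :=
  forall (R R' : profile) (s : nat -> nat),
    bijective s -> agent_relabel R R' s -> D R = D R'.

Definition renamed (s : {perm X}) (r r' : linord) : Prop :=
  forall x y, val r' (s x, s y) = val r (x, y).

Definition prop_relabel (s : {perm X}) (R R' : profile) : Prop :=
  forall i, match (prof R).[? i], (prof R').[? i] with
            | Some r, Some r' => renamed s r r'
            | None, None => True
            | _, _ => False
            end.

Definition neutral (D : profile -> {set X}) : Prop :=
  forall (s : {perm X}) (R R' : profile),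
    prop_relabel s R R' -> D R' = s @: D R.

Definition occ (R : profile) (r : linord) : nat :=
  #|[pred i : domf (prof R) | prof R i == r]|.

Definition perfectly_uniform (R : profile) : Prop :=
  forall r1 r2 : linord, occ R r1 = occ R r2.

Definition uniformity (D : profile -> {set X}) : Prop :=
  forall R, perfectly_uniform R -> D R = [set: X].

End DSF.

(* Main.v *)
Require Import Defs.
From mathcomp Require Import all_boot all_fingroup.
From mathcomp Require Import finmap.
Set Implicit Arguments. Unset Strict Implicit. Unset Printing Implicit Defensive.
Lemma cnt (T : finType) (U : eqType) (g : T -> U) u :
  count (preim g (pred1 u)) (enum T) = #|[pred i | g i == u]|.
Proof. rewrite cardE -size_filter enumT /enum_mem. by []. Qed.

Lemma fiber_perm (T : finType) (U : eqType) (f g : T -> U) :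
 (forall u, #|[pred i | f i == u]| = #|[pred i | g i == u]|) ->
 exists pi : {perm T}, forall i, f (pi i) = g i.
Proof.
move=> H.
have: perm_eq (map_tuple g (enum_tuple T)) (map_tuple f (enum_tuple T)).
  rewrite /perm_eq; apply/allP => u _; apply/eqP.
  rewrite /= !count_map.
  have E : forall h, count (preim id (preim h (pred1 u))) (Finite.enum T) = #|[pred i | h i == u]| by move=> h; rewrite cardE -size_filter /enum_mem.
  by rewrite !E H.
case/tuple_permP => p Hp.
have Hi : forall k, g (enum_val k) = f (enum_val (p k)).
  move=> k.
  move/val_inj: Hp => Hp.
  have := congr1 (fun t => tnth t k) Hp.
  rewrite /= tnth_map !tnth_map tnth_ord_tuple.
  have TE : forall j, tnth (enum_tuple T) j = enum_val j.
    by move=> j; rewrite (tnth_nth (enum_val j)) /enum_val; apply: set_nth_default; rewrite size_tuple.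
  by rewrite !TE.
have inj : injective (fun x => enum_val (p (enum_rank x))).
  by move=> x y /enum_val_inj /perm_inj /enum_rank_inj.
exists (perm inj) => i. by rewrite permE -Hi enum_rankK.
Qed.

Section Ren.
Variable X : finType.
Variable s : {perm X}.

Definition ren_fun (r : linord X) : {ffun X * X -> bool} :=
  [ffun p => val r ((s^-1)%g p.1, (s^-1)%g p.2)].

Lemma ren_slo (r : linord X) : is_slo (ren_fun r).
Proof.
have := valP r; move=> /and3P [/forallP H1 /forallP H2 /forallP H3].
apply/and3P; split.
- apply/forallP => x; rewrite ffunE; exact: H1.
- apply/forallP => x; apply/forallP => y; apply/forallP => z; rewrite !ffunE /=.
  move: (H2 ((s^-1)%g x)) => /forallP/(_ ((s^-1)%g y))/forallP/(_ ((s^-1)%g z)).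
  by [].
- apply/forallP => x; apply/forallP => y; apply/implyP => nxy; rewrite !ffunE /=.
  move: (H3 ((s^-1)%g x)) => /forallP/(_ ((s^-1)%g y)) /implyP; apply.
  by apply: contra nxy => /eqP /perm_inj ->.
Qed.

Definition ren (r : linord X) : linord X := exist _ (ren_fun r) (ren_slo r).

Lemma ren_renamed r : renamed s r (ren r).
Proof. by move=> x y; rewrite /= ffunE /= !permK. Qed.
End Ren.

Lemma ren_eq (X : finType) (s : {perm X}) a u :
  (ren s a == u) = (a == ren (s^-1)%g u).
Proof.
apply/eqP/eqP => [<-|->]; apply: val_inj; apply/ffunP => [[p q]];
  by rewrite /= !ffunE /= ?invgK ?permK ?permKV.
Qed.

Theorem proposition1 (X : finType) (D : profile X -> {set X}) :
  is_DSF D -> anonymous D -> neutral D -> uniformity D.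
Proof.
move=> HD HA HN R HU.
apply/setP => y; rewrite inE.
case/set0Pn: (HD R) => x Hx.
pose s := tperm x y.
pose f := fun i : domf (prof R) => prof R i.
pose g := fun i => ren s (f i).
have [pi Hpi] : exists pi : {perm domf (prof R)}, forall i, f (pi i) = g i.
  apply: fiber_perm => u.
  have -> : #|[pred i | g i == u]| = occ R (ren (s^-1)%g u).
    by apply: eq_card => i; rewrite !inE /g ren_eq.
  by rewrite (HU _ u).
pose Rm : {fmap nat -> linord X} := FinMap [ffun i => g i].
pose R' : profile X := exist _ Rm (proj2_sig R).
pose sig := fun n => if insub n : option (domf (prof R)) is Some i then val (pi i) else n.
pose sig' := fun n => if insub n : option (domf (prof R)) is Some i then val ((pi^-1)%g i) else n.
have bij : bijective sig.
  exists sig' => n.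
  - rewrite /sig; case: insubP => [i _ Ei|Hn]; rewrite /sig'.
      by rewrite valK permK.
    by rewrite insubN.
  - rewrite /sig'; case: insubP => [i _ Ei|Hn]; rewrite /sig.
      by rewrite valK permKV.
    by rewrite insubN.
have rel : agent_relabel R R' sig.
  move=> n; rewrite /sig /=.
  case: insubP => [i _ <-|Hn].
  - by rewrite -[LHS](@Some_fnd _ _ Rm i) -[RHS](@Some_fnd _ _ (prof R) (pi i)) /Rm /= ffunE -Hpi.
  - by rewrite (not_fnd Hn) (@not_fnd _ _ Rm n Hn).
have E1 := HA R R' sig bij rel.
have prel : prop_relabel s R R'.
  move=> n /=.
  case Hi: (n \in domf (prof R)).
  - rewrite (in_fnd Hi) (in_fnd (f:=Rm) Hi) /Rm /= ffunE.
    exact: ren_renamed.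
  - have Hn : n \notin domf (prof R) by rewrite Hi.
    by rewrite (not_fnd Hn) (@not_fnd _ _ Rm n Hn).
have E2 := HN s R R' prel.
rewrite E1 E2; apply/imsetP; exists x => //.
by rewrite /s tpermL.
Qed.
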